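(* For every $\varepsilon>0$, c-REShare$(\varepsilon)$ is a $2(1+\varepsilon)$-asymptotic competitive algorithm when service requests have unlimited duration, i.e., over request sequences in which all requests have $\tau_r=\infty$, $\limsup_{\phi(\mathrm{OPT})\to\infty}\phi(\text{c-REShare}(\varepsilon))/\phi(\mathrm{OPT})\le 2(1+\varepsilon)$.
   Context: Network: an undirected layered graph whose vertices (nodes) are datacenters. A node is at layer $\ell\ge 0$ if its distance in links from the closest leaf is $\ell$ (leaves are at layer $0$); the network has finitely many nodes. Every node can host arbitrarily many virtual machines (VMs). Each VM $b$ runs exactly one VNF $v$ from a finite set $\mathcal V$, has maximum computing capability $\bar\mu>0$ and allocated capability $\mu_b\le\bar\mu$. Each VNF $v$ has computing complexity $\theta_v\in(0,1]$. Requests: requests $r$ arrive online; each has a set $\mathcal V_r\subseteq\mathcal V$ of VNFs, arrival time $a_r$, duration $\tau_r$, traffic load $\lambda_r\ge\lambda_{\min}$ where $\lambda_{\min}=\inf_r\lambda_r>0$ is known in advance, end-to-end delay target $D_r$, and an arrival leaf. For $v\in\mathcal V_r$, $(r,v)$ is a job. For a VM $b$ running $v$, $\Lambda(b)$ is the total load of jobs on $b$, and each job on $b$ experiences processing latency $1/(\mu_b-\theta_v\Lambda(b))$. Forwarding latency from a leaf to layer $\ell$ is $d_\ell$, with $d_{\ell+1}>d_\ell$. The latency of $r$ is the maximum of $d_\ell$ over layers hosting its jobs plus the sum of processing latencies of its jobs. Fair delay allocation: $M_{r,v}=1/(\bar\mu-\theta_v\lambda_r)$; $\ell^*(r)$ is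 the highest layer $\ell$ with $d_\ell+\sum_{v\in\mathcal V_r}M_{r,v}\le D_r$ (assumed to exist); $D_r^v=\frac{M_{r,v}}{\sum_{u\in\mathcal V_r}M_{r,u}}(D_r-d_{\ell^*(r)})$. A deployment of $r$ is feasible if each job $(r,v)$ is on a VM $b$ running $v$ with $\mu_b\le\bar\mu$ and $1/(\mu_b-\theta_v\Lambda(b))\le D_r^v$, and the latency of $r$ is at most $D_r$. Cost: a VM $b$ at a node of layer $\ell$ hosting at least one job costs $\kappa_f^\ell+\kappa_p^\ell\mu_b$, with $\kappa_f^{\ell+1}<\kappa_f^\ell$, $\kappa_p^{\ell+1}<\kappa_p^\ell$. For an algorithm $A$, $\phi(A)$ is the total cost of the VMs it uses at the end of the request sequence. OPT is a minimum-cost feasible deployment of all requests computed with full knowledge of the sequence. Latency ranges: for $\varepsilon>0$, $L_0=[\frac{1}{\bar\mu-\lambda_{\min}},\frac{1}{\bar\mu-\lambda_{\min}(1+\varepsilon)}]$, $L_j=(\frac{1}{\bar\mu-\lambda_{\min}(1+\varepsilon)^j},\frac{1}{\bar\mu-\lambda_{\min}(1+\varepsilon)^{j+1}}]$ for $j\ge1$ (indices with $\lambda_{\min}(1+\varepsilon)^{j+1}<\bar\mu$); job $(r,v)$ is associated with $L_j$ if $D_r^v\in L_j$ (every fair delay allocation is presumed to lie in some range). Algorithm c-REShare$(\varepsilon)$: on arrival of $r$, compute $\ell^*(r)$ and choose a node $i^*$ at layer $\ell^*(r)$. For each $v\in\mathcal V_r$, with $j$ such that $D_r^v\in L_j$: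 a VM $b$ in $i^*$ running $v$ and hosting jobs associated with $L_j$ is viable if $\frac{1}{\bar\mu-\theta_v(\Lambda(b)+\lambda_r)}\le D_r^v$ and $\frac{1}{\bar\mu-\theta_v(\Lambda(b)+\lambda_r)}\le D_{r'}^v$ for every job $(r',v)$ already on $b$. If viable VMs exist, $(r,v)$ is placed on the viable VM with the largest $\Lambda(b)$, whose capability is set to $\theta_v\Lambda(b)+1/\min_{(r',v)\in b}D_{r'}^v$ (including the new job); otherwise a new VM running $v$ is opened in $i^*$ with capability $\theta_v\lambda_r+1/D_r^v$ and $(r,v)$ is placed on it. Asymptotic competitiveness: an algorithm $A$ is $c$-asymptotic competitive over a class of request sequences if $\limsup \phi(A)/\phi(\mathrm{OPT})\le c$ as $\phi(\mathrm{OPT})\to\infty$ over that class. *)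

(* Defs.v *)
From HB Require Import structures.
From mathcomp Require Import all_boot all_order all_algebra.
From mathcomp Require Import reals.
Set Implicit Arguments. Unset Strict Implicit. Unset Printing Implicit Defensive.
Import Order.TTheory GRing.Theory Num.Theory.
Local Open Scope ring_scope.

Record Model (R : realType) (Node VNF : finType) := mkModel {
  layer : Node -> nat;          (* layer of a node (distance to closest leaf) *)
  theta : VNF -> R;             (* computing complexity theta_v *)
  mubar : R;                    (* maximum computing capability of a VM *)
  lmin  : R;                    (* lambda_min, known lower bound on loads *)
  dfw   : nat -> R;             (* forwarding latency d_l from a leaf to layer l *)
  kf    : nat -> R;             (* fixed VM cost kappa_f^l *)
  kp    : nat -> R              (* proportional VM cost kappa_p^l *)
}.

(* A service request. [rdur = None] encodes an unlimited duration. *)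
Record Request (R : realType) (Node VNF : finType) := mkRequest {
  rV    : {set VNF};
  rlam  : R;           (* traffic load lambda_r *)
  rD    : R;           (* end-to-end delay target D_r *)
  rleaf : Node;        (* arrival leaf *)
  rarr  : R;           (* arrival time a_r *)
  rdur  : option R
}.

(* A VM of the online algorithm: node, VNF it runs, the latency range index
   of the jobs it hosts, hosted jobs (load lambda_r, delay allocation D_r^v),
   and allocated capability mu_b. *)
Record VM (R : realType) (Node VNF : finType) := mkVM {
  vnode  : Node;
  vvnf   : VNF;
  vrange : nat;
  vjobs  : seq (R * R);
  vcap   : R
}.

(* A (static) deployment, used for OPT: VMs are indexed by nat,
   [dnum] of them; job (k,v) (k-th request, VNF v) is placed on VM [dasg k v]. *)
Record Deployment (R : realType) (Node VNF : finType) := mkDep {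
  dnum  : nat;
  dnode : nat -> Node;
  dvnf  : nat -> VNF;
  dcap  : nat -> R;
  dasg  : nat -> VNF -> nat
}.

Section CREShare.
Variables (R : realType) (Node VNF : finType).
Variable M : Model R Node VNF.
Variable eps : R.

Local Notation Req := (Request R Node VNF).
Local Notation VMt := (VM R Node VNF).
Local Notation Dep := (Deployment R Node VNF).

Definition Mrv (r : Req) (v : VNF) : R := 1 / (mubar M - theta M v * rlam r).
Definition sumM (r : Req) : R := \sum_(v in rV r) Mrv r v.
Definition lstar_cond (r : Req) (l : nat) : bool := dfw M l + sumM r <= rD r.
Definition is_lstar (r : Req) (l : nat) : Prop :=
  [/\ exists i : Node, layer M i = l, lstar_cond r l &
      forall i : Node, lstar_cond r (layer M i) -> (layer M i <= l)%N].
Definition Drv (r : Req) (v : VNF) (l : nat) : R :=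
  Mrv r v / sumM r * (rD r - dfw M l).

Definition range_valid (j : nat) : bool := lmin M * (1 + eps) ^+ j.+1 < mubar M.
Definition inL (j : nat) (x : R) : bool :=
  if j == 0%N then
    (1 / (mubar M - lmin M) <= x) && (x <= 1 / (mubar M - lmin M * (1 + eps)))
  else
    (1 / (mubar M - lmin M * (1 + eps) ^+ j) < x)
    && (x <= 1 / (mubar M - lmin M * (1 + eps) ^+ j.+1)).

Definition load (b : VMt) : R := \sum_(p <- vjobs b) p.1.
Definition lat_after (b : VMt) (v : VNF) (lam : R) : R :=
  1 / (mubar M - theta M v * (load b + lam)).
Definition viable (i : Node) (v : VNF) (j : nat) (lam Dv : R) (b : VMt) : bool :=
  [&& vnode b == i, vvnf b == v, vrange b == j,
      0 < mubar M - theta M v * (load b + lam),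
      lat_after b v lam <= Dv &
      all (fun p => lat_after b v lam <= p.2) (vjobs b)].
Definition add_job (b : VMt) (v : VNF) (lam Dv : R) : VMt :=
  mkVM (vnode b) (vvnf b) (vrange b) ((lam, Dv) :: vjobs b)
       (theta M v * (load b + lam) + 1 / foldr Num.min Dv (map snd (vjobs b))).

(* One job placement step (relational: ties among viable VMs with the
   largest load may be broken arbitrarily). *)
Definition place_job (i : Node) (v : VNF) (j : nat) (lam Dv : R)
    (s s' : seq VMt) : Prop :=
  (exists s1 b s2,
      [/\ s = s1 ++ b :: s2, viable i v j lam Dv b,
          all (fun b' => viable i v j lam Dv b' ==> (load b' <= load b)) s &
          s' = s1 ++ add_job b v lam Dv :: s2])
  \/ (~~ has (viable i v j lam Dv) s /\
      s' = rcons s (mkVM i v j [:: (lam, Dv)] (theta M v * lam + 1 / Dv))).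

Fixpoint place_all (i : Node) (r : Req) (l : nat) (vs : seq VNF)
    (s s' : seq VMt) : Prop :=
  match vs with
  | [::] => s' = s
  | v :: vs' => exists s1 j,
      [/\ range_valid j, inL j (Drv r v l),
          place_job i v j (rlam r) (Drv r v l) s s1 &
          place_all i r l vs' s1 s']
  end.

(* [run rs s]: s is a possible final VM configuration of c-REShare(eps)
   after processing the requests rs in order (any choice of the node i* at
   layer l*(r); no departures since durations are unlimited). *)
Inductive run : seq Req -> seq VMt -> Prop :=
| run_nil : run [::] [::]
| run_step rs s r l i s' :
    run rs s -> is_lstar r l -> layer M i = l ->
    place_all i r l (enum (rV r)) s s' -> run (rcons rs r) s'.

Definition alg_cost (s : seq VMt) : R :=
  \sum_(b <- s) (kf M (layer M (vnode b)) + kp M (layer M (vnode b)) * vcap b).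

Definition req (rs : seq Req) (k : 'I_(size rs)) : Req := tnth (in_tuple rs) k.

Definition hosts (rs : seq Req) (D : Dep) (b : nat) : bool :=
  [exists k : 'I_(size rs), [exists v in rV (req k), dasg D k v == b]].

Definition dload (rs : seq Req) (D : Dep) (b : nat) : R :=
  \sum_(k < size rs) \sum_(v in rV (req k) | dasg D k v == b) rlam (req k).

Definition proc_lat (rs : seq Req) (D : Dep) (b : nat) (v : VNF) : R :=
  1 / (dcap D b - theta M v * dload rs D b).

Definition dep_cost (rs : seq Req) (D : Dep) : R :=
  \sum_(b < dnum D | hosts rs D b)
     (kf M (layer M (dnode D b)) + kp M (layer M (dnode D b)) * dcap D b).

Definition feasible (rs : seq Req) (D : Dep) : Prop :=
  forall k : 'I_(size rs),
    (forall v, v \in rV (req k) ->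
       [/\ (dasg D k v < dnum D)%N,
           dvnf D (dasg D k v) = v,
           dcap D (dasg D k v) <= mubar M,
           theta M v * dload rs D (dasg D k v) < dcap D (dasg D k v) &
           forall l, is_lstar (req k) l ->
             proc_lat rs D (dasg D k v) v <= Drv (req k) v l])
    /\ \big[Num.max/0]_(v in rV (req k)) dfw M (layer M (dnode D (dasg D k v)))
       + \sum_(v in rV (req k)) proc_lat rs D (dasg D k v) v <= rD (req k).

Definition is_opt_cost (rs : seq Req) (c : R) : Prop :=
  (forall D, feasible rs D -> c <= dep_cost rs D) /\
  (forall c', (forall D, feasible rs D -> c' <= dep_cost rs D) -> c' <= c).

Definition valid_request (r : Req) : Prop :=
  [/\ rdur r = None /\ lmin M <= rlam r,
      layer M (rleaf r) = 0%N,
      (forall v, v \in rV r -> theta M v * rlam r < mubar M),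
      (exists l, is_lstar r l) &
      (forall v l, v \in rV r -> is_lstar r l ->
         exists j, range_valid j /\ inL j (Drv r v l))].

Definition valid_seq (rs : seq Req) : Prop :=
  sorted (fun a b : Req => rarr a <= rarr b) rs /\
  forall k : 'I_(size rs), valid_request (req k).

Definition model_ok : Prop :=
  [/\ 0 < mubar M /\ 0 < lmin M,
      (forall v, 0 < theta M v <= 1),
      (forall i j : Node, (layer M i < layer M j)%N ->
         [/\ dfw M (layer M i) < dfw M (layer M j),
             kf M (layer M j) < kf M (layer M i) &
             kp M (layer M j) < kp M (layer M i)]),
      (forall i : Node, 0 <= dfw M (layer M i)) &
      (forall i : Node, 0 < kf M (layer M i) /\ 0 < kp M (layer M i))].

End CREShare.

(* Main.v *)
Require Import Defs.
From HB Require Import structures.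
From mathcomp Require Import all_boot all_order all_algebra.
From mathcomp Require Import reals.
From mathcomp Require Import lra ring.
Set Implicit Arguments. Unset Strict Implicit. Unset Printing Implicit Defensive.
Import Order.TTheory GRing.Theory Num.Theory.
Local Open Scope ring_scope.

Section Proof.
Variables (R : realType) (Node VNF : finType).
Variable M : Model R Node VNF.
Variable eps : R.
Hypothesis Hok : model_ok M.
Hypothesis Heps : 0 < eps.

Local Notation mu := (mubar M).
Local Notation lm := (lmin M).

Lemma mu_pos : 0 < mu. Proof. by case: Hok => [[]]. Qed.
Lemma lm_pos : 0 < lm. Proof. by case: Hok => [[]]. Qed.
Lemma th_pos v : 0 < theta M v. Proof. by case: Hok => _ /(_ v) /andP[]. Qed.

Lemma inv_swap (a b : R) : 0 < a -> 0 < b -> (1 / a <= b) = (1 / b <= a).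
Proof.
move=> a0 b0; rewrite !div1r -[in LHS](invrK b).
by rewrite lef_pV2 ?posrE ?invr_gt0.
Qed.

Lemma inv_swap2 (a b : R) : 0 < a -> 0 < b -> (b <= 1 / a) = (a <= 1 / b).
Proof.
move=> a0 b0; rewrite !div1r -[in LHS](invrK b).
by rewrite lef_pV2 ?posrE ?invr_gt0.
Qed.

Lemma inv_anti (a b : R) : 0 < a -> a <= b -> 1 / b <= 1 / a.
Proof.
move=> a0 ab; have b0 : 0 < b by apply: lt_le_trans ab.
by rewrite !div1r lef_pV2 ?posrE.
Qed.

Lemma inv_pos (a : R) : 0 < a -> 0 < 1 / a.
Proof. by move=> a0; rewrite div1r invr_gt0. Qed.

Definition B (j : nat) : R := lm * (1 + eps) ^+ j.

Lemma B_pos j : 0 < B j.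
Proof. by rewrite /B mulr_gt0 ?lm_pos // exprn_gt0 // ltr_wpDr // ltW. Qed.

Lemma BS j : B j.+1 = B j * (1 + eps).
Proof. by rewrite /B exprSr mulrA. Qed.

Lemma B_le j : B j <= B j.+1.
Proof.
by rewrite BS mulrDr mulr1 lerDl mulr_ge0 // ltW // B_pos.
Qed.

Lemma rv_B j : range_valid M eps j -> B j.+1 < mu.
Proof. by []. Qed.

Lemma inL_bounds j D : range_valid M eps j -> inL M eps j D ->
  1 / (mu - B j) <= D /\ D <= 1 / (mu - B j.+1).
Proof.
move=> rv; rewrite /inL; case: j rv => [|j] rv /=.
  by rewrite /B expr0 expr1 mulr1 => /andP[].
by case/andP=> /ltW h1 h2.
Qed.

Lemma inL_pos j D : range_valid M eps j -> inL M eps j D -> 0 < D.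
Proof.
move=> rv /(inL_bounds rv) [h _]; apply: lt_le_trans h; apply: inv_pos.
have := rv_B rv; have := B_le j; lra.
Qed.

Lemma inL_X j D : range_valid M eps j -> inL M eps j D ->
  B j <= mu - 1 / D /\ mu - 1 / D <= B j.+1.
Proof.
move=> rv hD; have D0 := inL_pos rv hD; have [h1 h2] := inL_bounds rv hD.
have b1 := rv_B rv; have b2 := B_le j.
have p1 : 0 < mu - B j by lra.
have p2 : 0 < mu - B j.+1 by lra.
rewrite inv_swap // in h1; rewrite inv_swap2 // in h2.
split; lra.
Qed.

Local Notation VMt := (VM R Node VNF).
Local Notation Req := (Request R Node VNF).

Definition Cl (l : nat) : R := kf M l + kp M l * mu.
Definition Xf (D : R) : R := mu - 1 / D.
Definition chg (v : VNF) (lam D : R) (l : nat) : R := theta M v * lam * Cl l / Xf D.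
Definition AC (b : VMt) : R :=
  \sum_(p <- vjobs b) chg (vvnf b) p.1 p.2 (layer M (vnode b)).
Definition okb (b : VMt) : bool :=
  [&& range_valid M eps (vrange b), vcap b <= mu &
      all (fun p => (lm <= p.1) && inL M eps (vrange b) p.2) (vjobs b)].
Definition sameg (a b : VMt) : bool :=
  [&& vnode a == vnode b, vvnf a == vvnf b & vrange a == vrange b].
Definition Pr (a b : VMt) : bool :=
  sameg a b ==> (B (vrange a) < theta M (vvnf a) * (load a + load b)).

Lemma load_add b v lam Dv : load (add_job M b v lam Dv) = lam + load b.
Proof. by rewrite /load big_cons. Qed.

Lemma AC_add b v lam Dv :
  AC (add_job M b v lam Dv) = chg (vvnf b) lam Dv (layer M (vnode b)) + AC b.
Proof. by rewrite /AC big_cons. Qed.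

Lemma pairwise_replace (T : Type) (r : rel T) s1 s2 x y :
  (forall z, r z x -> r z y) -> (forall z, r x z -> r y z) ->
  pairwise r (s1 ++ x :: s2) -> pairwise r (s1 ++ y :: s2).
Proof.
move=> h1 h2; rewrite !pairwise_cat !pairwise_cons !allrel_consr.
case/and3P=> /andP[a1 a2] a3 /andP[a4 a5].
by rewrite a2 a3 a5 (sub_all h1 a1) (sub_all h2 a4).
Qed.

Lemma foldr_min_ge (z Dv : R) (l : seq (R * R)) : z <= Dv ->
  all (fun p => z <= p.2) l -> z <= foldr Num.min Dv (map snd l).
Proof.
elim: l => [//|p l IH] /= h /andP[h1 h2]; by rewrite le_min h1 IH.
Qed.

Lemma foldr_min_gt (z Dv : R) (l : seq (R * R)) : z < Dv ->
  all (fun p => z < p.2) l -> z < foldr Num.min Dv (map snd l).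
Proof.
elim: l => [//|p l IH] /= h /andP[h1 h2]; by rewrite lt_min h1 IH.
Qed.

Lemma okb_jobs_pos b : okb b -> all (fun p => 0 < p.2) (vjobs b).
Proof.
case/and3P=> rv _ h; apply: sub_all h => p /andP[_ h]; exact: inL_pos rv h.
Qed.

Lemma okb_loads b : okb b -> 0 <= load b.
Proof.
case/and3P=> _ _; rewrite /load; elim: (vjobs b) => [|p l IH] /=.
  by rewrite big_nil.
case/andP=> /andP[h _] /IH; rewrite big_cons => h'.
by apply: addr_ge0 => //; apply: le_trans (ltW lm_pos) h.
Qed.

Lemma viable_of b i v j lam Dv : okb b -> vnode b = i -> vvnf b = v ->
  vrange b = j -> inL M eps j Dv ->
  theta M v * (load b + lam) <= B j -> viable M i v j lam Dv b.
Proof.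
move=> ok ei ev ej hD hB; have rv : range_valid M eps j by rewrite -ej; case/and3P: ok.
have b1 := rv_B rv; have b2 := B_le j.
have p1 : 0 < mu - B j by lra.
have p2 : 0 < mu - theta M v * (load b + lam) by lra.
have hl : lat_after M b v lam <= 1 / (mu - B j).
  by apply: inv_anti => //; lra.
rewrite /viable ei ev ej !eqxx p2 /=.
rewrite (le_trans hl (proj1 (inL_bounds rv hD))) /=.
case/and3P: ok => _ _; rewrite ej; apply: sub_all => p /andP[_ h].
exact: le_trans hl (proj1 (inL_bounds rv h)).
Qed.

Lemma add_cap b i v j lam Dv : okb b -> inL M eps j Dv -> range_valid M eps j ->
  viable M i v j lam Dv b -> vcap (add_job M b v lam Dv) <= mu.
Proof.
move=> ok hD rv /and5P[_ _ _ hp /andP[hl ha]] /=.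
set th := theta M v * (load b + lam) in hp hl ha *.
set m := foldr _ _ _.
have m0 : 0 < m by apply: foldr_min_gt (inL_pos rv hD) (okb_jobs_pos ok).
have hm : lat_after M b v lam <= m by apply: foldr_min_ge.
rewrite /lat_after -/th inv_swap // in hm.
lra.
Qed.

Lemma Pr_mono (x y z : VMt) : sameg x y -> vnode y = vnode x -> vvnf y = vvnf x ->
  vrange y = vrange x -> load x <= load y ->
  (Pr z x -> Pr z y) /\ (Pr x z -> Pr y z).
Proof.
move=> _ en ev er hl; rewrite /Pr /sameg en ev er; split.
  case: (_ && _) => //= h; apply: lt_le_trans h _.
  by rewrite ler_pM2l ?th_pos // lerD2l.
case: (_ && _) => //= h; apply: lt_le_trans h _.
by rewrite ler_pM2l ?th_pos // lerD2r.
Qed.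

Lemma place_job_inv i v j lam Dv s s' :
  lm <= lam -> range_valid M eps j -> inL M eps j Dv ->
  theta M v * lam + 1 / Dv <= mu ->
  all okb s -> pairwise Pr s -> place_job M i v j lam Dv s s' ->
  [/\ all okb s', pairwise Pr s' &
      \sum_(b <- s') AC b = \sum_(b <- s) AC b + chg v lam Dv (layer M i)].
Proof.
move=> hlam rv hD hcap oks prs [[s1 [b [s2 [Es vb _ ->]]]]|[nv ->]]; first subst s.
  have vb' := vb; case/and5P: vb' => /eqP ei /eqP ev /eqP ej _ _.
  have /andP[o1 /andP[ob o2]] : all okb s1 && (okb b && all okb s2) by move: oks; rewrite all_cat.
  have ob' : okb (add_job M b v lam Dv).
    case/and3P: (ob) => rvb _ allb.
    have hD' : inL M eps (vrange b) Dv by rewrite ej.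
    by rewrite /okb /= rvb (add_cap ob hD rv vb) hlam hD' allb.
  have [P1 P2] : (forall z, Pr z b -> Pr z (add_job M b v lam Dv)) /\
                 (forall z, Pr b z -> Pr (add_job M b v lam Dv) z).
    split=> z; have := @Pr_mono b (add_job M b v lam Dv) z;
      (case=> //; first by rewrite /sameg /= !eqxx);
      rewrite load_add lerDr; apply: le_trans (ltW lm_pos) hlam.
  split.
  - by rewrite all_cat /= o1 ob' o2.
  - exact: pairwise_replace P1 P2 prs.
  rewrite !big_cat !big_cons /= AC_add ev ei; ring.
set nb := mkVM _ _ _ _ _.
have lnb : load nb = lam by rewrite /load /= big_cons big_nil addr0.
split.
- rewrite all_rcons oks andbT /okb /= rv hcap hlam hD //.
- rewrite pairwise_rcons prs andbT.
  rewrite -all_predC in nv.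
  have : all (predI okb (predC (viable M i v j lam Dv))) s by rewrite all_predI oks nv.
  apply: sub_all => b /andP[ob /= nvb].
  apply/implyP => /and3P[/eqP ei /eqP ev /eqP ej]; rewrite lnb ev ej /=.
  rewrite ltNge; apply/negP => h; move/negP: nvb; apply.
  by apply: viable_of.
- by rewrite -cats1 big_cat big_seq1 /AC /= big_seq1.
Qed.

Definition Lf (r : Req) : nat := (\max_(i : Node | lstar_cond M r (layer M i)) layer M i)%N.

Lemma lstar_Lf r l : is_lstar M r l -> l = Lf r.
Proof.
case=> [[i0 e0] c h]; apply/eqP; rewrite eqn_leq; apply/andP; split.
  by rewrite -e0; apply: leq_bigmax_cond; rewrite e0.
by apply/bigmax_leqP => i ci; exact: h.
Qed.

Definition hr (r : Req) : R :=
  \sum_(v in rV r) chg v (rlam r) (Drv M r v (Lf r)) (Lf r).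

Lemma Mrv_pos r u : theta M u * rlam r < mu -> 0 < Mrv M r u.
Proof. by move=> h; apply: inv_pos; rewrite subr_gt0. Qed.

Lemma Drv_ge r l v : valid_request M eps r -> is_lstar M r l -> v \in rV r ->
  Mrv M r v <= Drv M r v l.
Proof.
case=> _ _ hth _ _ hl hv.
have Mp : forall u, u \in rV r -> 0 < Mrv M r u by move=> u hu; apply: Mrv_pos; apply: hth.
have hS : Mrv M r v <= sumM M r.
  rewrite /sumM (bigD1 v) //= lerDl; apply: sumr_ge0 => u /andP[hu _].
  exact: ltW (Mp u hu).
have S0 : 0 < sumM M r by apply: lt_le_trans hS; apply: Mp.
have hc : sumM M r <= rD r - dfw M l.
  by case: hl => _ c _; move: c; rewrite /lstar_cond; lra.
rewrite /Drv; apply: le_trans (ler_wpM2l _ hc); last first.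
  by apply: divr_ge0; [exact: ltW (Mp v hv)|exact: ltW].
by rewrite divfK // gt_eqF.
Qed.

Lemma Drv_cap r l v : valid_request M eps r -> is_lstar M r l -> v \in rV r ->
  theta M v * rlam r + 1 / Drv M r v l <= mu.
Proof.
move=> vr hl hv; have := Drv_ge vr hl hv.
case: vr => _ _ hth _ _; have := hth v hv => ht.
have Mp := Mrv_pos ht => hge.
have := inv_anti Mp hge; rewrite /Mrv !div1r invrK; lra.
Qed.

Lemma place_all_inv i r l vs s s' : valid_request M eps r -> is_lstar M r l ->
  layer M i = l -> all (mem (rV r)) vs -> all okb s -> pairwise Pr s ->
  place_all M eps i r l vs s s' ->
  [/\ all okb s', pairwise Pr s' &
      \sum_(b <- s') AC b = \sum_(b <- s) AC b +
         \sum_(v <- vs) chg v (rlam r) (Drv M r v l) l].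
Proof.
move=> vr hl ei; elim: vs s => [|v vs IH] s /=.
  by move=> _ oks prs ->; rewrite big_nil addr0.
case/andP=> hv hvs oks prs [s1 [j [rv hD pj pa]]].
have hlam : lm <= rlam r by case: vr => -[].
have [o1 p1 e1] := place_job_inv hlam rv hD (Drv_cap vr hl hv) oks prs pj.
have [o2 p2 e2] := IH s1 hvs o1 p1 pa.
by split=> //; rewrite e2 e1 big_cons ei addrA.
Qed.

Lemma run_inv rs s : run M eps rs s ->
  (forall x0 n, (n < size rs)%N -> valid_request M eps (nth x0 rs n)) ->
  [/\ all okb s, pairwise Pr s & \sum_(b <- s) AC b = \sum_(r <- rs) hr r].
Proof.
elim=> [|rs0 s0 r l i s' _ IH hl ei pa] hv; first by rewrite !big_nil.
have hv0 : forall x0 n, (n < size rs0)%N -> valid_request M eps (nth x0 rs0 n).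
  move=> x0 n hn; have := hv x0 n; rewrite size_rcons nth_rcons hn; apply.
  exact: leqW.
have vr : valid_request M eps r.
  have := hv r (size rs0); rewrite size_rcons nth_rcons ltnn eqxx; apply.
  exact: ltnSn.
have [o0 p0 e0] := IH hv0.
have hall : all (mem (rV r)) (enum (rV r)) by apply/allP => x; rewrite mem_enum.
have [o1 p1 e1] := place_all_inv vr hl ei hall o0 p0 pa.
split=> //; rewrite e1 e0 -cats1 big_cat big_seq1 /hr big_enum /=.
by rewrite -(lstar_Lf hl).
Qed.

Definition Cmax : R := \sum_(i : Node) Cl (layer M i).
Definition small (b : VMt) : bool := 2 * (theta M (vvnf b) * load b) <= B (vrange b).
Definition Nb : nat := Num.Def.archi_bound (mu / (lm * eps)).
Definition K0 : R := Cmax * (#|Node| * #|VNF| * Nb.+1)%N%:R.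

Lemma kf_pos i : 0 < kf M (layer M i). Proof. by case: Hok => _ _ _ _ /(_ i) []. Qed.
Lemma kp_pos i : 0 < kp M (layer M i). Proof. by case: Hok => _ _ _ _ /(_ i) []. Qed.

Lemma Cl_pos i : 0 < Cl (layer M i).
Proof. by rewrite /Cl addr_gt0 ?kf_pos // mulr_gt0 ?kp_pos ?mu_pos. Qed.

Lemma Cl_Cmax i : Cl (layer M i) <= Cmax.
Proof.
rewrite /Cmax (bigD1 i) //= lerDl; apply: sumr_ge0 => k _; exact: ltW (Cl_pos k).
Qed.

Lemma bernoulli n : 1 + n%:R * eps <= (1 + eps) ^+ n.
Proof.
elim: n => [|n IH]; first by rewrite expr0 mul0r addr0.
rewrite exprS -natr1.
have h0 : 0 <= n%:R :> R by apply: ler0n.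
have h1 : (1 + eps) * (1 + n%:R * eps) <= (1 + eps) * (1 + eps) ^+ n.
  by apply: ler_wpM2l => //; rewrite addr_ge0 // ltW.
have h2 : 0 <= n%:R * eps * eps by rewrite !mulr_ge0 // ltW.
lra.
Qed.

Lemma rv_bound j : range_valid M eps j -> (j < Nb)%N.
Proof.
move=> rv; have hb := bernoulli j.+1.
have h1 : lm * (j.+1%:R * eps) < mu.
  apply: le_lt_trans rv; rewrite ler_pM2l ?lm_pos //; lra.
have h2 : j.+1%:R < mu / (lm * eps).
  by rewrite ltr_pdivlMr ?mulr_gt0 ?lm_pos //; move: h1; rewrite mulrCA.
have h3 := archi_boundP (ltW (lt_le_trans (ltr0Sn _ _) (ltW h2))).
have : (j.+1%:R : R) < (Nb)%:R by apply: lt_trans h2 h3.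
by rewrite ltr_nat => /ltnW.
Qed.

Lemma div_anti (a x y : R) : 0 <= a -> 0 < x -> x <= y -> a / y <= a / x.
Proof.
move=> a0 x0 xy; rewrite ler_wpM2l // lef_pV2 ?posrE //; exact: lt_le_trans xy.
Qed.

Lemma AC_ge b : okb b ->
  theta M (vvnf b) * load b * Cl (layer M (vnode b)) / B (vrange b).+1 <= AC b.
Proof.
case/and3P=> rv _; rewrite /AC /load.
have C0 := Cl_pos (vnode b).
set C := Cl (layer M (vnode b)) in C0 *.
set v := vvnf b.
elim: (vjobs b) => [|p js IH] /=; first by rewrite !big_nil mulr0 !mul0r.
case/andP=> /andP[hl hD] /IH {}IH; rewrite !big_cons.
have -> : theta M v * (p.1 + \sum_(j <- js) j.1) * C / B (vrange b).+1 =
   theta M v * p.1 * C / B (vrange b).+1 + theta M v * (\sum_(j <- js) j.1) * C / B (vrange b).+1.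
  by ring.
apply: lerD => //.
have [X1 X2] := inL_X rv hD.
rewrite /chg /Xf -/C; apply: (div_anti (x := mu - 1 / p.2)) => //.
  by rewrite mulr_ge0 ?(ltW C0) // mulr_ge0 ?(ltW (th_pos _)) // (le_trans (ltW lm_pos) hl).
exact: lt_le_trans (B_pos _) X1.
Qed.

Lemma vm_bound b : okb b ->
  kf M (layer M (vnode b)) + kp M (layer M (vnode b)) * vcap b <=
  2 * (1 + eps) * AC b + (if small b then Cmax else 0).
Proof.
move=> ok; have hAC := AC_ge ok.
have ok' := ok; case/and3P: ok' => rv hcap _.
set C := Cl (layer M (vnode b)); have C0 : 0 < C by apply: Cl_pos.
have hc : kf M (layer M (vnode b)) + kp M (layer M (vnode b)) * vcap b <= C.
  by rewrite /C /Cl lerD2l ler_wpM2l // ltW // kp_pos.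
set t := theta M (vvnf b) * load b.
have t0 : 0 <= t by rewrite mulr_ge0 ?(ltW (th_pos _)) // okb_loads.
have Bj := B_pos (vrange b).
have hA0 : 0 <= AC b.
  apply: le_trans hAC; apply: divr_ge0; last exact: ltW (B_pos _).
  by apply: mulr_ge0 => //; exact: ltW.
rewrite /small -/t; case: ifP => hs.
  have := Cl_Cmax (vnode b); rewrite -/C => hC.
  have : 0 <= 2 * (1 + eps) * AC b by rewrite !mulr_ge0 // addr_ge0 // ltW.
  lra.
have hlt : B (vrange b) < 2 * t by rewrite ltNge hs.
have e : 2 * (1 + eps) * (t * C / B (vrange b).+1) = (2 * t) * C / B (vrange b).
  rewrite BS; field; apply/andP; split; rewrite gt_eqF //; have := Heps; lra.
have : C <= (2 * t) * C / B (vrange b).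
  by rewrite ler_pdivlMr // [C * _]mulrC ler_pM2r // ltW.
have : 2 * (1 + eps) * (t * C / B (vrange b).+1) <= 2 * (1 + eps) * AC b.
  by rewrite ler_pM2l // mulr_gt0 //; have := Heps; lra.
rewrite e; lra.
Qed.

Definition key (b : VMt) : (Node * VNF * 'I_Nb.+1)%type :=
  (vnode b, vvnf b, inord (vrange b)).

Lemma count_small s : all okb s -> pairwise Pr s ->
  (count small s <= #|Node| * #|VNF| * Nb.+1)%N.
Proof.
move=> oks prs; rewrite -size_filter.
set sf := filter small s.
have hu : uniq (map key sf).
  rewrite uniq_pairwise pairwise_map.
  apply: (@sub_in_pairwise _ [pred b | okb b && small b] Pr).
  - move=> a b; rewrite !inE => /andP[oa sa] /andP[ob sb] hP /=.
    apply/eqP => -[en ev er].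
    have ra : (vrange a < Nb.+1)%N by apply: ltnW; rewrite ltnS; apply: rv_bound; case/and3P: oa.
    have rb : (vrange b < Nb.+1)%N by apply: ltnW; rewrite ltnS; apply: rv_bound; case/and3P: ob.
    have := congr1 val er; rewrite /= !inordK // => er'.
    move: hP; rewrite /Pr /sameg en ev er' !eqxx /= => hP.
    move: sa sb; rewrite /small ev er' => sa sb.
    move: hP; rewrite mulrDr; lra.
  - by rewrite all_filter; apply: sub_all oks => b ob; apply/implyP => sb; rewrite inE ob sb.
  - exact: pairwise_filter.
rewrite -(size_map key) -(card_uniqP hu).
apply: leq_trans (max_card _) _.
by rewrite !card_prod card_ord.
Qed.

Lemma alg_bound s : all okb s -> pairwise Pr s ->
  alg_cost M s <= 2 * (1 + eps) * \sum_(b <- s) AC b + K0.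
Proof.
move=> oks prs.
have h1 : alg_cost M s <= \sum_(b <- s) (2 * (1 + eps) * AC b + (if small b then Cmax else 0)).
  rewrite /alg_cost; elim: s oks {prs} => [|b s IH] /=; first by rewrite !big_nil.
  case/andP=> ob os; rewrite !big_cons; apply: lerD (vm_bound ob) (IH os).
have h2 : \sum_(b <- s) (if small b then Cmax else 0) = Cmax * (count small s)%:R.
  elim: s {oks prs h1} => [|b s IH] /=; first by rewrite big_nil mulr0.
  rewrite big_cons IH natrD mulrDr; case: (small b) => /=; by rewrite ?mulr1 ?mulr0.
apply: le_trans h1 _; rewrite big_split /= -mulr_sumr h2 lerD2l /K0.
apply: ler_wpM2l; first by apply: sumr_ge0 => i _; exact: ltW (Cl_pos i).
by rewrite ler_nat count_small.
Qed.

Local Notation Dep := (Deployment R Node VNF).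

Lemma Cl_mono (i1 i2 : Node) : (layer M i1 <= layer M i2)%N ->
  Cl (layer M i2) <= Cl (layer M i1).
Proof.
rewrite leq_eqVlt => /orP[/eqP -> //|h].
case: Hok => _ _ /(_ i1 i2 h) [_ h1 h2] _ _.
rewrite /Cl; apply: lerD; first exact: ltW.
by rewrite ler_pM2r ?mu_pos // ltW.
Qed.

Section Opt.
Variables (rs : seq Req) (D : Dep).
Hypothesis Hval : forall k : 'I_(size rs), valid_request M eps (req k).
Hypothesis Hfeas : feasible M rs D.

Lemma lam_pos (k : 'I_(size rs)) : 0 < rlam (req k).
Proof. by case: (Hval k) => -[_ h] _ _ _ _; apply: lt_le_trans lm_pos h. Qed.

Lemma dload_ge (b : nat) (k : 'I_(size rs)) v : v \in rV (req k) -> dasg D k v == b ->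
  rlam (req k) <= dload rs D b.
Proof.
move=> hv he; rewrite /dload (bigD1 k) //= (bigD1 v) /=; last by rewrite hv he.
rewrite -addrA lerDl addr_ge0 //.
  by apply: sumr_ge0 => u _; exact: ltW (lam_pos k).
apply: sumr_ge0 => k' _; apply: sumr_ge0 => u _; exact: ltW (lam_pos k').
Qed.

Definition Fj (k : 'I_(size rs)) (v : VNF) : R :=
  chg v (rlam (req k)) (Drv M (req k) v (Lf (req k))) (Lf (req k)).

Lemma opt_job (b : nat) k v : v \in rV (req k) -> dasg D k v == b ->
  (0 < theta M (dvnf D b) * dload rs D b + mu - dcap D b) ->
  Fj k v <= theta M (dvnf D b) * Cl (layer M (dnode D b)) /
             (theta M (dvnf D b) * dload rs D b + mu - dcap D b) * rlam (req k).
Proof.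
move=> hv he Z0.
have [[_ hlam] _ hth [l0 hl0] hrg] := Hval k.
have hl : is_lstar M (req k) (Lf (req k)) by rewrite -(lstar_Lf hl0).
have [j [rv hD]] := hrg v (Lf (req k)) hv hl.
have [_ hdv hcap htl hpl] := (Hfeas k).1 v hv.
rewrite (eqP he) in hdv hcap htl hpl.
have hp := hpl _ hl.
have D0 := inL_pos rv hD. have [X1 _] := inL_X rv hD.
rewrite hdv in Z0 *; rewrite /proc_lat in hp.
have pz : 0 < dcap D b - theta M v * dload rs D b by rewrite subr_gt0.
rewrite inv_swap // in hp.
have XZ : theta M v * dload rs D b + mu - dcap D b <=
          Xf (Drv M (req k) v (Lf (req k))).
  by rewrite /Xf; lra.
have hlay : (layer M (dnode D b) <= Lf (req k))%N.
  have hl' := hl; case: hl' => _ _ hmax; apply: hmax; rewrite /lstar_cond.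
  have [_ hsum] := Hfeas k.
  have hm : dfw M (layer M (dnode D b)) <=
      \big[Num.max/0]_(v in rV (req k)) dfw M (layer M (dnode D (dasg D k v))).
    rewrite -(eqP he).
    exact: (le_bigmax_cond 0 (fun v => dfw M (layer M (dnode D (dasg D k v)))) hv).
  have hs : sumM M (req k) <= \sum_(v in rV (req k)) proc_lat M rs D (dasg D k v) v.
    apply: ler_sum => u hu; have [_ _ hcu htu _] := (Hfeas k).1 u hu.
    have hdl := dload_ge hu (eqxx _).
    have hh := ler_wpM2l (ltW (th_pos u)) hdl.
    rewrite /Mrv /proc_lat; apply: inv_anti; lra.
  lra.
have [[i hi] _ _] := hl.
have Clb : Cl (Lf (req k)) <= Cl (layer M (dnode D b)).
  by rewrite -hi; apply: Cl_mono; rewrite hi.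
have Cl0 : 0 < Cl (Lf (req k)) by rewrite -hi; apply: Cl_pos.
have L0 := lam_pos k.
have T0 := th_pos v.
rewrite /Fj /chg.
apply: le_trans (div_anti _ Z0 XZ) _.
  by apply: mulr_ge0; [apply: mulr_ge0|]; exact: ltW.
have -> : theta M v * Cl (layer M (dnode D b)) /
      (theta M v * dload rs D b + mu - dcap D b) * rlam (req k) =
    theta M v * rlam (req k) * Cl (layer M (dnode D b)) /
      (theta M v * dload rs D b + mu - dcap D b) by ring.
apply: ler_wpM2r; first by rewrite invr_ge0 ltW.
by apply: ler_wpM2l => //; apply: mulr_ge0; exact: ltW.
Qed.

Lemma opt_vm (b : 'I_(dnum D)) : hosts rs D b ->
  \sum_(k < size rs) \sum_(v in rV (req k) | dasg D k v == b) Fj k v <=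
  kf M (layer M (dnode D b)) + kp M (layer M (dnode D b)) * dcap D b.
Proof.
case/existsP=> k0 /existsP[v0 /andP[hv0 he0]].
have [_ hdv0 hcap0 htl0 _] := (Hfeas k0).1 v0 hv0.
rewrite (eqP he0) in hdv0 hcap0 htl0.
rewrite -hdv0 in htl0.
have hdl := dload_ge hv0 he0.
have T0 : 0 < theta M (dvnf D b) * dload rs D b.
  exact: mulr_gt0 (th_pos _) (lt_le_trans (lam_pos k0) hdl).
have Z0 : 0 < theta M (dvnf D b) * dload rs D b + mu - dcap D b by lra.
set c := theta M (dvnf D b) * Cl (layer M (dnode D b)) /
             (theta M (dvnf D b) * dload rs D b + mu - dcap D b).
apply: (@le_trans _ _ (\sum_(k < size rs) \sum_(v in rV (req k) | dasg D k v == b)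
                        c * rlam (req k))).
  apply: ler_sum => k _; apply: ler_sum => v /andP[hv he]; exact: opt_job hv he Z0.
have -> : \sum_(k < size rs) \sum_(v in rV (req k) | dasg D k v == b) c * rlam (req k)
          = c * dload rs D b.
  by rewrite /dload mulr_sumr; apply: eq_bigr => k _; rewrite mulr_sumr.
rewrite /c /Cl.
have kf00 : 0 < kf M (layer M (dnode D b)) by apply: kf_pos.
have kp00 : 0 < kp M (layer M (dnode D b)) by apply: kp_pos.
move: T0 Z0 hcap0 htl0 kf00 kp00.
move: (theta M (dvnf D b)) (dload rs D b) (kf M _) (kp M _) (dcap D b) => th dl kf0 kp0 cap.
move=> T0 Z0 hcap0 htl0 kf00 kp00.
have -> : th * (kf0 + kp0 * mu) / (th * dl + mu - cap) * dl =
   (th * dl) * (kf0 + kp0 * mu) / (th * dl + mu - cap) by ring.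
move: T0 Z0 htl0; move: (th * dl) => T T0 Z0 htl0.
rewrite ler_pdivrMr //.
have h1 : 0 <= kf0 * (mu - cap) by rewrite mulr_ge0 ?subr_ge0 // ltW.
have h2 : 0 <= kp0 * ((mu - cap) * (cap - T)).
  by rewrite !mulr_ge0 ?subr_ge0 // ltW.
lra.
Qed.

Lemma opt_bound : \sum_(r <- rs) hr r <= dep_cost M rs D.
Proof.
have -> : \sum_(r <- rs) hr r = \sum_(k < size rs) \sum_(v in rV (req k)) Fj k v.
  by rewrite big_tnth; apply: eq_bigr => k _.
have -> : \sum_(k < size rs) \sum_(v in rV (req k)) Fj k v =
    \sum_(b < dnum D) \sum_(k < size rs) \sum_(v in rV (req k) | dasg D k v == b) Fj k v.
  rewrite exchange_big /=; apply: eq_bigr => k _.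
  rewrite (exchange_big_dep (fun v => v \in rV (req k))) /=; last by move=> b v _ /andP[].
  apply: eq_bigr => v hv.
  have [hlt _ _ _ _] := (Hfeas k).1 v hv.
  rewrite (bigD1 (Ordinal hlt)) /=; last by rewrite hv eqxx.
  rewrite big1 ?addr0 // => b' /andP[/andP[_ e] hb'].
  exfalso; move/eqP: hb'; apply; apply: val_inj => /=.
  by rewrite (eqP e).
rewrite /dep_cost [X in _ <= X]big_mkcond /=; apply: ler_sum => b _; case: ifP => hb.
  exact: opt_vm.
rewrite big1 // => k _; rewrite big1 // => v /andP[hv he]; exfalso.
suff : hosts rs D b by rewrite hb.
by apply/existsP; exists k; apply/existsP; exists v; rewrite hv.
Qed.
End Opt.

Lemma K0_ge0 : 0 <= K0.
Proof.
rewrite /K0 mulr_ge0 ?ler0n //; apply: sumr_ge0 => i _; exact: ltW (Cl_pos i).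
Qed.

Lemma main_in (delta : R) : 0 < delta ->
  exists K : R, forall (rs : seq Req) (s : seq VMt) (c : R),
    valid_seq M eps rs -> run M eps rs s -> is_opt_cost M rs c -> K <= c ->
    alg_cost M s <= (2 * (1 + eps) + delta) * c.
Proof.
move=> Hd; exists (K0 / delta) => rs s c [_ hval] hrun [_ hopt] hK.
have hv' : forall x0 n, (n < size rs)%N -> valid_request M eps (nth x0 rs n).
  by move=> x0 n hn; have := hval (Ordinal hn); rewrite /req (tnth_nth x0).
have [oks prs hsum] := run_inv hrun hv'.
have hS : \sum_(r <- rs) hr r <= c.
  by apply: hopt => D hD; apply: opt_bound.
have hA := alg_bound oks prs; rewrite hsum in hA.
have k0 := K0_ge0.
have hKc : K0 <= delta * c by move: hK; rewrite ler_pdivrMr // mulrC.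
have h2 : 2 * (1 + eps) * \sum_(r <- rs) hr r <= 2 * (1 + eps) * c.
  by apply: ler_wpM2l => //; rewrite mulr_ge0 // addr_ge0 // ltW.
lra.
Qed.

End Proof.

Theorem theorem1 (R : realType) (Node VNF : finType) (M : Model R Node VNF)
    (eps : R) :
  model_ok M -> 0 < eps ->
  forall delta : R, 0 < delta ->
  exists K : R, forall (rs : seq (Request R Node VNF)) (s : seq (VM R Node VNF)) (c : R),
    valid_seq M eps rs -> run M eps rs s -> is_opt_cost M rs c -> K <= c ->
    alg_cost M s <= (2 * (1 + eps) + delta) * c.
Proof.
move=> Hok Heps; exact: main_in Hok Heps.
Qed.
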